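(* Let $\mathcal{F}=\{\sum_{i=1}^m a_i\,\mathrm{ReLU}(w_i^\top x+b_i): m\in\mathbb{N},\ w_i\in\mathbb{R}^d,\ a_i,b_i\in\mathbb{R}\}$ be the class of two-layer ReLU networks on $\mathbb{R}^d$, and let $P,Q$ be distributions supported on the unit sphere $S^{d-1}=\{x:\|x\|_2=1\}$. Suppose there exists $\epsilon>0$ with $$Q\big(\{x\in S^{d-1}:\mathrm{dist}(x,\mathrm{supp}(P))\ge\epsilon\}\big)>0.$$ Then for every $M>0$ there exists $f\in\mathcal{F}$ with $\mathbb{E}_P[f(x)^2]=0$ and $\mathbb{E}_Q[f(x)^2]\ge M$.
   Context: $\mathrm{ReLU}(z)=\max(z,0)$; $\mathrm{supp}(P)$ is the support of $P$ and $\mathrm{dist}(x,S)=\inf_{s\in S}\|x-s\|_2$. *)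

(* Defs.v *)
From HB Require Import structures.
From mathcomp Require Import all_boot all_order all_algebra.
From mathcomp Require Import all_classical all_reals all_analysis.
Set Implicit Arguments. Unset Strict Implicit. Unset Printing Implicit Defensive.
Import Order.TTheory GRing.Theory Num.Theory.
Import numFieldNormedType.Exports.
Local Open Scope classical_set_scope.
Local Open Scope ring_scope.

(* R^d as row vectors, with its Borel sigma-algebra (generated by the open sets
   of the usual topology on 'rV[R]_d; all norms on R^d induce this topology). *)
Definition BorelRd (R : realType) (d : nat) :=
  g_sigma_algebraType (@open ('rV[R]_d)).

Definition norm2 {R : realType} {d : nat} (x : 'rV[R]_d) : R :=
  Num.sqrt (\sum_(i < d) (x ord0 i) ^+ 2).
Definition dotp {R : realType} {d : nat} (w x : 'rV[R]_d) : R :=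
  \sum_(i < d) w ord0 i * x ord0 i.

Definition sphere {R : realType} (d : nat) : set 'rV[R]_d :=
  [set x | norm2 x = 1].

Definition dist {R : realType} {d : nat} (x : 'rV[R]_d) (S : set 'rV[R]_d) : R :=
  inf [set norm2 (x - s) | s in S].

Definition relu {R : realType} (z : R) : R := Num.max z 0.

Definition supp {R : realType} {d : nat}
  (P : probability (BorelRd R d) R) : set 'rV[R]_d :=
  [set x | forall U : set 'rV[R]_d, open U -> U x -> (0 < P U)%E].

Definition relu_net {R : realType} {d : nat} (f : 'rV[R]_d -> R) : Prop :=
  exists (m : nat) (a b : 'I_m -> R) (w : 'I_m -> 'rV[R]_d),
    forall x, f x = \sum_(i < m) a i * relu (dotp (w i) x + b i).

(* Main.v *)
Require Import Defs.
From HB Require Import structures.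
From mathcomp Require Import all_boot all_order all_algebra.
From mathcomp Require Import all_classical all_reals all_analysis.
From mathcomp Require Import measurable_realfun lebesgue_measure.
From mathcomp Require Import lra ring finmap.
Import Order.TTheory GRing.Theory Num.Theory.
Import numFieldNormedType.Exports.
Local Open Scope classical_set_scope.
Local Open Scope ring_scope.

Section H.
Context {R : realType} {d : nat}.
Local Notation V := 'rV[R]_d.
Local Notation T := (BorelRd R d).

Lemma mO (U : set V) : open U -> measurable (U : set T).
Proof. by move=> oU; apply: sub_sigma_algebra. Qed.

Lemma mC (U : set V) : closed U -> measurable (U : set T).
Proof. by move=> /closed_openC/mO/measurableC; rewrite setCK. Qed.

Lemma mcont (g : V -> R) : continuous g -> measurable_fun setT (g : T -> R).
Proof.
move=> /continuousP cg.
apply: (measurability _ (measurable_realfun.RGenOpens.measurableE R)).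
move=> _ [_ [a [b ->] <-]]; rewrite setTI; apply: mO.
exact/cg/interval_open.
Qed.

Lemma sum_cont (I : finType) (F : I -> V -> R) :
  (forall i, continuous (F i)) -> continuous (fun x => \sum_i F i x).
Proof. by move=> h; apply: continuous_big => //; exact: add_continuous. Qed.

Lemma dotp_cont (w : V) : continuous (fun x => dotp w x).
Proof.
apply: sum_cont => i x; apply: continuousM; first exact: cst_continuous.
exact: coord_continuous.
Qed.

Lemma sq_cont (s : V) : continuous (fun y : V => \sum_(i < d) ((y - s) ord0 i) ^+ 2).
Proof.
apply: sum_cont => i.
have -> : (fun y : V => (y - s) ord0 i ^+ 2) =
  (fun y => (y ord0 i - s ord0 i) * (y ord0 i - s ord0 i)).
  by apply: funext => y; rewrite !mxE expr2.
set g := fun y : V => y ord0 i - s ord0 i.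
move=> y; change {for y, continuous (g \* g)}.
have gc : {for y, continuous g}.
  by apply: continuousB; [exact: coord_continuous | exact: cst_continuous].
exact: continuousM.
Qed.

Lemma n2_cont (s : V) : continuous (fun y : V => norm2 (y - s)).
Proof.
move=> y; apply: (continuous_comp (sq_cont s y)).
exact: sqrt_continuous.
Qed.

Lemma norm2_ge0 (x : V) : 0 <= norm2 x.
Proof. exact: sqrtr_ge0. Qed.

Lemma dist_le (S : set V) x s : S s -> dist x S <= norm2 (x - s).
Proof.
move=> Ss; apply: ge_inf; last by exists s.
by exists 0 => _ [t _ <-]; exact: norm2_ge0.
Qed.

Lemma dist_closed (S : set V) (eps : R) : 0 < eps ->
  closed [set x : V | eps <= dist x S].
Proof.
move=> e0; have [[s0 Ss0]|S0] := pselect (S !=set0); last first.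
  have -> : [set x : V | eps <= dist x S] = set0.
    apply/seteqP; split => // x /=; rewrite /dist.
    have -> : S = set0 by apply/seteqP; split => // t St; apply: S0; exists t.
    by rewrite image_set0 inf0 => h; move: (lt_le_trans e0 h); rewrite ltxx.
  exact: closed0.
rewrite -[X in closed X]setCK; apply: open_closedC.
have -> : ~` [set x : V | eps <= dist x S] =
  \bigcup_(s in S) [set y | norm2 (y - s) < eps].
  apply/seteqP; split => x /=.
  - move/negP; rewrite -ltNge => dlt.
    have [_ [t St <-] lt] := inf_lt (S := [set norm2 (x - s) | s in S])
      (ex_intro _ (norm2 (x - s0)) (ex_intro2 _ _ s0 Ss0 erefl)) dlt.
    by exists t.
  - move=> [s Ss hs]; apply/negP; rewrite -ltNge.
    by apply: (le_lt_trans (@dist_le S x s Ss)); exact: hs.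
apply: bigcup_open => s _.
exact: (@open_comp _ _ (fun y : V => norm2 (y - s)) [set r : R | r < eps]
  (fun y _ => n2_cont s y) (@open_lt _ eps)).
Qed.

Lemma sphere_closed : closed (@sphere R d).
Proof.
have -> : @sphere R d = (fun y : V => norm2 (y - 0)) @^-1` [set r | r = 1].
  by apply/seteqP; split => x /=; rewrite subr0.
apply: preimage_closed; last exact: closed_eq.
by move=> y _; exact: n2_cont.
Qed.

Lemma sphere_sum (x : V) : sphere x -> \sum_(i < d) (x ord0 i) ^+ 2 = 1.
Proof.
rewrite /sphere /norm2 /= => h.
rewrite -(@sqr_sqrtr _ (\sum_(i < d) (x ord0 i) ^+ 2)); first by rewrite h expr1n.
by apply: sumr_ge0 => i _; exact: sqr_ge0.
Qed.

Lemma sphere_compact : compact (@sphere R d).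
Proof.
apply: (@subclosed_compact _ _ [set v : V | forall i, `[-1, 1]%classic (v ord0 i)]).
- exact: sphere_closed.
- have h := (@rV_compact R d (fun=> `[-1, 1]%classic) (fun=> @segment_compact R (-1) 1)); exact: h.
move=> x /sphere_sum h i /=.
have : (x ord0 i) ^+ 2 <= 1.
  rewrite -h (bigD1 i) //= lerDl; apply: sumr_ge0 => j _; exact: sqr_ge0.
rewrite in_itv /= => hx; apply/andP; split; nra.
Qed.

Lemma cover_negl (mu : {measure set T -> \bar R}) (K : set V) : compact K ->
  (forall x, K x -> exists U : set V,
     [/\ open U, U x & mu.-negligible (K `&` U : set T)]) ->
  mu.-negligible (K : set T).
Proof.
move=> cK h.
have hx : forall x, exists U : set V, K x ->
    [/\ open U, U x & mu.-negligible (K `&` U : set T)].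
  move=> x; have [Kx|nKx] := pselect (K x).
    by have [U hU] := h x Kx; exists U.
  by exists setT.
have [g hg] := choice hx.
rewrite compact_cover in cK.
have [D' sD cov] := cK V K g (fun i Ki => let: And3 o _ _ := hg i Ki in o)
  (fun x Kx => ex_intro2 _ _ x Kx (let: And3 _ gx _ := hg x Kx in gx)).
have sub : (K : set T) `<=` \big[setU/set0]_(i <- D') (K `&` g i).
  rewrite -bigcup_fset => x Kx; have [i Di gi] := cov x Kx.
  by exists i.
apply: (negligibleS sub).
rewrite big_seq; elim/big_rec: _ => [|i X Di hX]; first exact: negligible_set0.
apply: negligibleU => //.
have /sD : i \in D' := Di.
by move=> /set_mem Ki; have [] := hg i Ki.
Qed.

Definition netf (alpha c : R) (a : V) (x : V) :=
  \sum_(i < 1) alpha * relu (dotp a x + - c).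

Lemma netf_cont alpha c a : continuous (fun x : V => (netf alpha c a x) ^+ 2).
Proof.
move=> x.
have -> : netf alpha c a = (fun=> alpha) \* ((fun y => dotp a y + - c) \max (fun=> 0)).
  by apply: funext => y; rewrite /netf big_ord1.
set h := (_ \* _).
change {for x, continuous (h \* h)}.
have hc : {for x, continuous h}.
  apply: continuousM; first exact: cst_continuous.
  apply: continuous_max; last exact: cst_continuous.
  apply: continuousD; first exact: dotp_cont.
  exact: cst_continuous.
exact: continuousM.
Qed.

Lemma sphere_dist_sq (a x : V) : sphere a -> sphere x ->
  norm2 (a - x) ^+ 2 = 2 - 2 * dotp a x.
Proof.
move=> /sphere_sum ha /sphere_sum hx.
rewrite /norm2 sqr_sqrtr; last by apply: sumr_ge0 => i _; exact: sqr_ge0.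
have -> : \sum_(i < d) (a - x) ord0 i ^+ 2 =
  \sum_(i < d) (a ord0 i ^+ 2 + x ord0 i ^+ 2 - 2 * (a ord0 i * x ord0 i)).
  by apply: eq_bigr => i _; rewrite !mxE; ring.
rewrite big_split big_split /= ha hx /dotp sumrN -mulr_sumr /=.
ring.
Qed.
End H.

Lemma alg1 {R : realType} {eps n p : R} : 0 < eps -> eps <= n -> n ^+ 2 = 2 - 2 * p ->
  0 <= n -> 1 - eps ^+ 2 / 8 <= p -> False.
Proof. move=> *; nra. Qed.

Lemma alg2 {R : realType} {t alpha delta m : R} : 0 <= t -> alpha * delta = t ->
  0 <= alpha -> delta <= m -> t ^+ 2 <= (alpha * m) ^+ 2.
Proof.
move=> t0 e a0 dm; have h : t <= alpha * m by rewrite -e ler_wpM2l.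
have h' : 0 <= alpha * m by apply: le_trans h.
nra.
Qed.

Lemma alg3 {R : realType} {t q M : R} : 0 < q -> 1 <= t -> t * q = M + q ->
  M <= t ^+ 2 * q.
Proof.
move=> q0 t1 e; have tt : t <= t ^+ 2 by nra.
have : t * q <= t ^+ 2 * q by rewrite ler_pM2r.
lra.
Qed.

Theorem mainTheorem7 (R : realType) (d : nat)
  (P Q : probability (BorelRd R d) R)
  (hP : P (@sphere R d) = 1%E) (hQ : Q (@sphere R d) = 1%E) :
  (exists eps : R, 0 < eps /\
     (0 < Q [set x | @sphere R d x /\ (eps <= dist x (supp P))%R])%E) ->
  forall M : R, 0 < M ->
    exists f : 'rV[R]_d -> R, relu_net f /\
      (\int[P]_x ((f x) ^+ 2)%:E = 0)%E /\
      (M%:E <= \int[Q]_x ((f x) ^+ 2)%:E)%E.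
Proof.
move=> [eps [e0 hQA]] M M0.
set S := supp P.
set A : set 'rV[R]_d := [set x | sphere x /\ eps <= dist x S].
have Acl : closed A.
  exact: (closedI (@sphere_closed R d) (@dist_closed R d S eps e0)).
have Acp : compact A.
  by apply: (subclosed_compact Acl (@sphere_compact R d)) => x [].
have mA : measurable (A : set (BorelRd R d)) := mC _ Acl.
set U := fun a : 'rV[R]_d => [set x | 1 - eps ^+ 2 / 32 < dotp a x].
have Uo : forall a, open (U a).
  move=> a; exact: (@open_comp _ _ (fun y : 'rV[R]_d => dotp a y) _
    (fun y _ => @dotp_cont R d a y) (@open_gt _ _)).
have [a [Aa Qpos]] : exists a, A a /\ (0 < Q (A `&` U a))%E.
  apply: contrapT => hn.
  have : Q.-negligible (A : set (BorelRd R d)).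
    apply: (@cover_negl R d Q A Acp) => x Ax; exists (U x); split => //.
      rewrite /U /= /dotp.
      have -> : \sum_(i < d) x ord0 i * x ord0 i = 1.
        by rewrite -(@sphere_sum R d x Ax.1); apply: eq_bigr => i _; rewrite expr2.
      have : 0 < eps ^+ 2 / 32 by apply: divr_gt0 => //; exact: exprn_gt0.
      lra.
    apply/negligibleP; first exact: measurableI mA (mO _ (Uo x)).
    apply/eqP; rewrite eq_le measure_ge0 andbT leNgt; apply/negP => h.
    by apply: hn; exists x.
  by move/negligibleP => /(_ mA) Q0; rewrite Q0 ltxx in hQA.
set B : set 'rV[R]_d := A `&` U a.
have mB : measurable (B : set (BorelRd R d)) := measurableI _ _ mA (mO _ (Uo a)).
have [q q0 Qq] : exists2 q : R, 0 < q & Q B = q%:E.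
  have QB1 : (Q B <= 1)%E := probability_le1 _ mB.
  move: Qpos QB1; rewrite -/B.
  case: (Q B) => [r r0 _| _ | ]; last by [].
    by exists r => //; rewrite lte_fin in r0.
  by [].
set c : R := 1 - eps ^+ 2 / 8.
set delta : R := 3 * eps ^+ 2 / 32.
have dl0 : 0 < delta by apply: divr_gt0 => //; apply: mulr_gt0 => //; exact: exprn_gt0.
set t : R := M / q + 1.
have t1 : 1 <= t by rewrite /t lerDr; apply: divr_ge0; apply: ltW.
set alpha : R := t / delta.
have al0 : 0 <= alpha by apply: divr_ge0; [lra | exact: ltW].
have mf2 : measurable_fun setT
    (fun x : BorelRd R d => ((netf alpha c a x) ^+ 2)%:E).
  by apply/measurable_EFinP; apply: mcont; exact: netf_cont.
have f20 : forall x : BorelRd R d, setT x -> (0 <= ((netf alpha c a x) ^+ 2)%:E)%E.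
  by move=> x _; rewrite lee_fin; exact: sqr_ge0.
exists (netf alpha c a); split.
  by exists 1%N, (fun=> alpha), (fun=> - c), (fun=> a).
split.
  set Vs : set 'rV[R]_d := [set x | sphere x /\ c <= dotp a x].
  have Vcl : closed Vs.
    apply: (closedI (@sphere_closed R d)).
    exact: (@preimage_closed _ _ (fun y : 'rV[R]_d => dotp a y) _
      (fun y _ => @dotp_cont R d a y) (@closed_ge _ c)).
  have Vcp : compact Vs.
    by apply: (subclosed_compact Vcl (@sphere_compact R d)) => x [].
  have nV : P.-negligible (Vs : set (BorelRd R d)).
    apply: (@cover_negl R d P Vs Vcp) => x [sx cx].
    have nSx : ~ S x.
      move=> Sx.
      have h1 : eps <= norm2 (a - x) := le_trans Aa.2 (@dist_le R d S a x Sx).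
      have h2 := @sphere_dist_sq R d a x Aa.1 sx.
      have h3 := norm2_ge0 (a - x).
      move: cx; rewrite /c => cx.
      exact: (alg1 e0 h1 h2 h3 cx).
    have [W [oW Wx nW]] : exists W : set 'rV[R]_d,
        [/\ open W, W x & ~ (0 < P W)%E].
      apply: contrapT => hn; apply: nSx => W oW Wx.
      by apply: contrapT => hp; apply: hn; exists W.
    exists W; split => //.
    apply: (negligibleS (@subIsetr _ _ _)).
    apply/negligibleP; first exact: mO.
    by apply/eqP; rewrite eq_le measure_ge0 andbT leNgt; apply/negP.
  have nS : P.-negligible (~` (@sphere R d) : set (BorelRd R d)).
    apply/negligibleP; first exact: measurableC (mC _ (@sphere_closed R d)).
    have := @probability_setC _ _ _ P (@sphere R d) (mC _ (@sphere_closed R d)).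
    by rewrite hP subee.
  rewrite (@ge0_ae_eq_integral _ _ _ P setT _ (cst 0%E)) ?integral0 //.
  apply: (negligibleS _ (negligibleU nS nV)) => x /= hx.
  case: (pselect (sphere x)) => sx; last by left.
  right; split => //; rewrite leNgt; apply/negP => lt.
  apply: hx => _; rewrite /netf big_ord1 /relu max_r; first by rewrite mulr0 expr2 mulr0.
  by rewrite -(subrr c) lerD2r ltW.
have h1 := @ge0_subset_integral _ _ _ Q B setT mB measurableT _ mf2 f20 (@subsetT _ B).
have h2 : (\int[Q]_(x in B) (cst (t ^+ 2)%:E) x <=
    \int[Q]_(x in B) (netf alpha c a x ^+ 2)%:E)%E.
  apply: ge0_le_integral => //.
  - by move=> x _; rewrite lee_fin sqr_ge0.
  - exact: measurable_funS measurableT _ mf2.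
  move=> x [[sx dx] ux]; rewrite lee_fin /netf big_ord1 /relu.
  have hm : dotp a x + - c <= Num.max (dotp a x + - c) 0 by rewrite le_max lexx.
  apply: (alg2 (delta:=delta) _ _ al0).
  - lra.
  - by rewrite /alpha divfK // gt_eqF.
  apply: le_trans hm; move: ux; rewrite /U /= /delta /c; lra.
have h3 := integral_cst Q mB (t ^+ 2)%:E.
apply: le_trans h1; apply: le_trans h2; rewrite h3.
rewrite [X in (_ * X)%E](_ : _ = q%:E); last exact: Qq.
rewrite -EFinM lee_fin.
have tq : t * q = M + q by rewrite /t mulrDl divfK ?mul1r // (gt_eqF q0).
exact: alg3 q0 t1 tq.
Qed.
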